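(* Fix $\lambda\in\mathbb R$. The following four subsets of $\mathcal X$ are all equal: (a) $\Pi^{(a)}_\lambda=\{x\in\mathcal X: g_\lambda(x)=0\}$; (b) $\Pi^{(b)}_\lambda=\{x\in\mathcal X: H_\lambda(x,0)<H_\lambda(x,1)\}$; (c) $\Pi^{(c)}_\lambda=\{x\in\mathcal X: \exists \sigma\in\Sigma,\ \sigma\neq 0,\ \text{such that } J^{(h_{\sigma,\lambda})}_\lambda(x)<J^{(h_{0,\lambda})}_\lambda(x)\}$; (d) $\Pi^{(d)}_\lambda=\{x\in\mathcal X: \exists \sigma\in\Sigma,\ \sigma\neq 0,\ \text{such that } (1-\beta)\big(L(x,\sigma)-c(x,1)\big)<W_\lambda(x)-\mathbb E[\beta^\sigma W_\lambda(X_\sigma)\mid X_0=x]\}$.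
   Context: A restless bandit (RB) consists of a finite or countable state space $\mathcal X$, action set $\{0,1\}$ (0 = passive, 1 = active), transition matrices $P(0),P(1)$ on $\mathcal X$ ($P_{xy}(a)$ is the probability of moving from $x$ to $y$ under action $a$), and a cost function $c:\mathcal X\times\{0,1\}\to\mathbb R$; $\beta\in(0,1)$ is a discount factor. For $\lambda\in\mathbb R$ let $c_\lambda(x,a)=c(x,a)+\lambda a$. For a (possibly history-dependent) policy $h$, $J^{(h)}_\lambda(x)=(1-\beta)\mathbb E[\sum_{t\ge0}\beta^t c_\lambda(X_t,A_t)\mid X_0=x]$ where actions $A_t$ are chosen by $h$ and $X_{t+1}$ is drawn from $P_{X_t\,\cdot}(A_t)$. Let $V_\lambda$ be the unique fixed point of $V_\lambda(x)=\min\{H_\lambda(x,0),H_\lambda(x,1)\}$, where $H_\lambda(x,a)=(1-\beta)c_\lambda(x,a)+\beta\sum_{y}P_{xy}(a)V_\lambda(y)$. Let $g_\lambda(x)=0$ if $H_\lambda(x,0)<H_\lambda(x,1)$ and $g_\lambda(x)=1$ otherwise (ties broken toward the active action); $g_\lambda$ is an optimal Markov policy for minimizing $J_\lambda$. Let $\Sigma$ be the family of all stopping times with respect to the natural filtration of $\{X_t\}_{t\ge0}$. For $x\in\mathcal X$ and $\tau\in\Sigma$ define $M(x,\tau)=\mathbb E[\beta^\tau\mid X_0=x,\ A_t=0 \text{ for } t<\tau]$, $L(x,\tau)=\mathbb E[\sum_{t=0}^{\tau-1}\beta^t c(X_t,0)+\beta^\tau c(X_\tau,1)\mid X_0=x,\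 A_t=0\text{ for }t<\tau]$, and $W_\lambda(x)=(1-\beta)\lambda+\beta\sum_{y}P_{xy}(1)V_\lambda(y)$. Expectations involving $X_\sigma$ in (d) are under passive actions before time $\sigma$. For $\tau\in\Sigma$, $h_{\tau,\lambda}$ denotes the history-dependent policy that takes the passive action at times $0,\dots,\tau-1$, the active action at time $\tau$, and follows $g_\lambda$ thereafter; $h_{0,\lambda}$ is this policy with $\tau=0$. *)

(* Defs.v *)
From HB Require Import structures.
From mathcomp Require Import all_boot all_order all_algebra.
From mathcomp Require Import all_classical all_reals all_analysis.
Set Implicit Arguments. Unset Strict Implicit. Unset Printing Implicit Defensive.
Import Order.TTheory GRing.Theory Num.Theory.
Import numFieldNormedType.Exports.
Local Open Scope classical_set_scope.
Local Open Scope ring_scope.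

Section RB.
Variables (R : realType) (X : countType).

(* Sum over the countable state space: limit of the partial sums along the
   canonical enumeration of X (used only on absolutely summable families). *)
Definition cterm (f : X -> R) (n : nat) : R :=
  match (pickle_inv n : option X) with Some y => f y | None => 0 end.
Definition csum (f : X -> R) : R := limn (series (cterm f)).

Definition tsum (u : nat -> R) : R := limn (series u).

(* A transition kernel: P a x y = P_{xy}(a), a stochastic matrix for each a. *)
Definition stochastic (P : bool -> X -> X -> R) : Prop :=
  (forall a x y, 0 <= P a x y) /\
  (forall a x, series (cterm (P a x)) @ \oo --> (1 : R)).

Definition bounded_cost (c : X -> bool -> R) : Prop :=
  exists M : R, forall x a, `|c x a| <= M.

Definition bounded_fun (V : X -> R) : Prop :=
  exists M : R, forall x, `|V x| <= M.

Definition clam (c : X -> bool -> R) (lam : R) (x : X) (a : bool) : R :=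
  c x a + (if a then lam else 0).

Definition Hq (P : bool -> X -> X -> R) (c : X -> bool -> R) (beta lam : R)
  (V : X -> R) (x : X) (a : bool) : R :=
  (1 - beta) * clam c lam x a + beta * csum (fun y => P a x y * V y).

(* V is the fixed point of the Bellman equation (bounded, hence unique) *)
Definition bellman_fixed_point (P : bool -> X -> X -> R) (c : X -> bool -> R)
  (beta lam : R) (V : X -> R) : Prop :=
  bounded_fun V /\
  forall x, V x = Num.min (Hq P c beta lam V x false) (Hq P c beta lam V x true).

(* g_lambda: passive (false) iff H(x,0) < H(x,1), ties to active *)
Definition gpol P c beta lam V (x : X) : bool :=
  ~~ (Hq P c beta lam V x false < Hq P c beta lam V x true).

(* Histories: a history X_0,...,X_t is represented as (x0, s) with
   x0 = X_0 and s = [:: X_1; ...; X_t]; current state is last x0 s.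
   A deterministic history-dependent policy is h : X -> seq X -> bool. *)

Fixpoint Eh (P : bool -> X -> X -> R) (h : X -> seq X -> bool) (t : nat)
  (f : X -> seq X -> R) (x0 : X) (s : seq X) {struct t} : R :=
  match t with
  | 0 => f x0 s
  | t'.+1 => csum (fun y => P (h x0 s) (last x0 s) y * Eh P h t' f x0 (rcons s y))
  end.

Definition Jpol P c beta lam (h : X -> seq X -> bool) (x : X) : R :=
  (1 - beta) *
  tsum (fun t => beta ^+ t *
        Eh P h t (fun x0 s => clam c lam (last x0 s) (h x0 s)) x [::]).

(* Stopping times w.r.t. the natural filtration of (X_t): a stopping time
   sigma is encoded by stop : X -> seq X -> bool, where
   sigma = the first t such that stop holds on the history X_0..X_t
   (sigma = +oo if there is no such t).  Every stopping time arises so. *)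
Definition notyet (stop : X -> seq X -> bool) (x0 : X) (s : seq X) : bool :=
  all (fun k => ~~ stop x0 (take k s)) (iota 0 (size s)).
(* on a history of length t+1: sigma = t *)
Definition sig_eq stop x0 s := notyet stop x0 s && stop x0 s.
(* sigma > t *)
Definition sig_gt stop x0 s := notyet stop x0 s && ~~ stop x0 s.

Definition stop_nonzero (stop : X -> seq X -> bool) : Prop :=
  ~ (forall y, stop y [::]).

(* h_{sigma,lambda}: passive before sigma, active at sigma, g_lambda after *)
Definition hsig (stop : X -> seq X -> bool) (g : X -> bool) (x0 : X) (s : seq X)
  : bool :=
  if notyet stop x0 s then stop x0 s else g (last x0 s).

Definition stop0 : X -> seq X -> bool := fun _ _ => true.

Definition passive : X -> seq X -> bool := fun _ _ => false.

(* L(x,sigma) = E[ sum_{t<sigma} beta^t c(X_t,0) + beta^sigma c(X_sigma,1) ]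
   under passive actions before sigma (beta^oo = 0). *)
Definition Lfun P c beta (x : X) (stop : X -> seq X -> bool) : R :=
  tsum (fun t => beta ^+ t *
    Eh P passive t (fun x0 s =>
        (if sig_gt stop x0 s then c (last x0 s) false else 0) +
        (if sig_eq stop x0 s then c (last x0 s) true else 0)) x [::]).

Definition Wfun P beta lam (V : X -> R) (x : X) : R :=
  (1 - beta) * lam + beta * csum (fun y => P true x y * V y).

Definition EWsig P beta (W : X -> R) (x : X) (stop : X -> seq X -> bool) : R :=
  tsum (fun t => beta ^+ t *
    Eh P passive t (fun x0 s => if sig_eq stop x0 s then W (last x0 s) else 0)
       x [::]).

Definition Pi_a P c beta lam V : set X := [set x | gpol P c beta lam V x = false].
Definition Pi_b P c beta lam V : set X :=
  [set x | Hq P c beta lam V x false < Hq P c beta lam V x true].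
Definition Pi_c P c beta lam V : set X :=
  [set x | exists stop, stop_nonzero stop /\
     Jpol P c beta lam (hsig stop (gpol P c beta lam V)) x
     < Jpol P c beta lam (hsig stop0 (gpol P c beta lam V)) x].
Definition Pi_d P c beta lam V : set X :=
  [set x | exists stop, stop_nonzero stop /\
     (1 - beta) * (Lfun P c beta x stop - c x true)
     < Wfun P beta lam V x - EWsig P beta (Wfun P beta lam V) x stop].

End RB.

(* Main.v *)
Require Import Defs.
From HB Require Import structures.
From mathcomp Require Import all_boot all_order all_algebra.
From mathcomp Require Import all_classical all_reals all_analysis.
From mathcomp Require Import ring lra.
Import Order.TTheory GRing.Theory Num.Theory.
Import numFieldNormedType.Exports.
Local Open Scope classical_set_scope.
Local Open Scope ring_scope.

Section Aux.
Variable R : realType.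

Lemma dom_cvg (a b : nat -> R) : (forall n, `|a n| <= b n) ->
  cvgn (series b) -> cvgn (series a).
Proof.
move=> hab hb; apply: normed_cvg.
apply: (@series_le_cvg R (fun n => `|a n|) b) => // n.
exact: le_trans (normr_ge0 _) (hab n).
Qed.

Lemma seriesMl (k : R) (a : nat -> R) :
  series (fun n => k * a n) = (fun N => k * series a N).
Proof. by apply/funext => N; rewrite /series /= mulr_sumr. Qed.

Lemma seriesDf (a b : nat -> R) :
  series (fun n => a n + b n) = (fun N => series a N + series b N).
Proof. by apply/funext => N; rewrite /series /= big_split. Qed.

Lemma seriesS (a : nat -> R) n : series a n.+1 = series a n + a n.
Proof. by rewrite /series /= big_nat_recr. Qed.

Lemma cvgn_Ml (k : R) (a : nat -> R) : cvgn (series a) -> cvgn (series (fun n => k * a n)).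
Proof. by rewrite seriesMl => h; apply: is_cvgMl_tmp. Qed.

Lemma limn_Ml (k : R) (a : nat -> R) : cvgn (series a) ->
  limn (series (fun n => k * a n)) = k * limn (series a).
Proof. by rewrite seriesMl => h; apply: cvg_lim => //; apply: cvgMl_tmp. Qed.

Lemma cvgn_D (a b : nat -> R) : cvgn (series a) -> cvgn (series b) ->
  cvgn (series (fun n => a n + b n)).
Proof. by rewrite seriesDf => ha hb; apply: is_cvgD. Qed.

Lemma limn_D (a b : nat -> R) : cvgn (series a) -> cvgn (series b) ->
  limn (series (fun n => a n + b n)) = limn (series a) + limn (series b).
Proof. by rewrite seriesDf => ha hb; apply: cvg_lim => //; apply: cvgD. Qed.

Lemma limn_le (a b : nat -> R) : cvgn (series a) -> cvgn (series b) ->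
  (forall n, a n <= b n) -> limn (series a) <= limn (series b).
Proof.
move=> ha hb hab; apply: ler_lim => //; apply: nearW => N.
by rewrite /series /=; apply: ler_sum => i _.
Qed.


Variable X : countType.

Lemma cterm_mul (f g : X -> R) n : cterm (fun y => f y * g y) n = cterm f n * cterm g n.
Proof. by rewrite /cterm; case: (pickle_inv n) => // ; rewrite mulr0. Qed.

Lemma cterm_add (f g : X -> R) n : cterm (fun y => f y + g y) n = cterm f n + cterm g n.
Proof. by rewrite /cterm; case: (pickle_inv n) => // ; rewrite addr0. Qed.

Lemma cterm_cst (k : R) n : cterm (fun _ : X => k) n = (if (pickle_inv n : option X) is Some _ then k else 0).
Proof. by []. Qed.

Definition sprob (p : X -> R) := (forall y, 0 <= p y) /\ series (cterm p) @ \oo --> (1 : R).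

Definition bnd (u : X -> R) (M : R) := forall y, `|u y| <= M.

Lemma cterm_ge0 (p : X -> R) : (forall y, 0 <= p y) -> forall n, 0 <= cterm p n.
Proof. by move=> h n; rewrite /cterm; case: (pickle_inv n). Qed.

Lemma csum_cvg (p u : X -> R) (M : R) : sprob p -> 0 <= M -> bnd u M ->
  cvgn (series (cterm (fun y => p y * u y))).
Proof.
move=> [hp0 hp1] M0 hu.
apply: (@dom_cvg _ (fun n => M * cterm p n)); last first.
  by apply: cvgn_Ml; apply/cvg_ex; exists 1.
move=> n; rewrite cterm_mul normrM (ger0_norm (@cterm_ge0 p hp0 n)) mulrC.
apply: ler_wpM2r; first exact: cterm_ge0.
by rewrite /cterm; case: (pickle_inv n) => // ; rewrite normr0.
Qed.
Arguments csum_cvg {p u M}.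


Lemma csumD (p u v : X -> R) (M N : R) : sprob p -> 0 <= M -> bnd u M -> 0 <= N -> bnd v N ->
  csum (fun y => p y * (u y + v y)) = csum (fun y => p y * u y) + csum (fun y => p y * v y).
Proof.
move=> hp M0 hu N0 hv; rewrite /csum -limn_D; last 2 first.
  exact: (csum_cvg hp M0 hu).
  exact: (csum_cvg hp N0 hv).
suff -> : cterm (fun y => p y * (u y + v y)) =
  (fun n => cterm (fun y => p y * u y) n + cterm (fun y => p y * v y) n) by [].
apply/funext => n.
by rewrite -cterm_add; congr cterm; apply/funext => y; rewrite mulrDr.
Qed.
Arguments csumD {p u v M N}.


Lemma csumMl (p u : X -> R) (M k : R) : sprob p -> 0 <= M -> bnd u M ->
  csum (fun y => p y * (k * u y)) = k * csum (fun y => p y * u y).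
Proof.
move=> hp M0 hu; rewrite /csum -limn_Ml; last exact: (csum_cvg hp M0 hu).
suff -> : cterm (fun y => p y * (k * u y)) =
  (fun n => k * cterm (fun y => p y * u y) n) by [].
apply/funext => n.
rewrite /cterm; case: (pickle_inv n) => [y|]; last by rewrite mulr0.
by rewrite mulrCA.
Qed.
Arguments csumMl {p u M} k.


Lemma csum_cst (p : X -> R) (k : R) : sprob p -> csum (fun y => p y * k) = k.
Proof.
move=> [hp0 hp1]; rewrite /csum.
have -> : cterm (fun y => p y * k) = (fun n => k * cterm p n).
  apply/funext => n; rewrite /cterm; case: (pickle_inv n) => [y|]; last by rewrite mulr0.
  by rewrite mulrC.
rewrite limn_Ml; last by apply/cvg_ex; exists 1.
by rewrite (cvg_lim _ hp1) ?mulr1.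
Qed.
Arguments csum_cst {p} k.


Lemma csum_le (p u v : X -> R) (M N : R) : sprob p -> 0 <= M -> bnd u M -> 0 <= N -> bnd v N ->
  (forall y, u y <= v y) ->
  csum (fun y => p y * u y) <= csum (fun y => p y * v y).
Proof.
move=> hp M0 hu N0 hv huv; apply: limn_le; [exact: (csum_cvg hp M0 hu)|exact: (csum_cvg hp N0 hv)|].
move=> n; rewrite !cterm_mul; apply: ler_wpM2l; first by apply: cterm_ge0; case: hp.
by rewrite /cterm; case: (pickle_inv n).
Qed.
Arguments csum_le {p u v M N}.


Lemma csum_bnd (p u : X -> R) (M : R) : sprob p -> 0 <= M -> bnd u M -> `|csum (fun y => p y * u y)| <= M.
Proof.
move=> hp M0 hu; rewrite ler_norml; apply/andP; split.
  rewrite -{1}(csum_cst (-M) hp); apply: (csum_le (M:=M) (N:=M)) => //.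
    by move=> y; rewrite normrN ger0_norm.
  by move=> y; have := hu y; rewrite ler_norml => /andP[].
rewrite -(csum_cst M hp); apply: (csum_le (M:=M) (N:=M)) => //.
  by move=> y; rewrite ger0_norm.
by move=> y; have := hu y; rewrite ler_norml => /andP[].
Qed.
Arguments csum_bnd {p u M}.


Lemma csum0 (p : X -> R) : csum (fun y => p y * 0) = 0.
Proof.
rewrite /csum; have -> : cterm (fun y => p y * 0) = fun _ => 0.
  by apply/funext => n; rewrite /cterm; case: (pickle_inv n) => *; rewrite ?mulr0.
have -> : series (fun _ : nat => (0:R)) = fun _ => 0.
  by apply/funext => n; rewrite /series /= big1.
exact: lim_cst.
Qed.


Variable P : bool -> X -> X -> R.
Hypothesis hP : forall a x, sprob (P a x).

Definition hbnd (f : X -> seq X -> R) (M : R) := forall x0 s, `|f x0 s| <= M.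

Section Pol.
Variable h : X -> seq X -> bool.

Lemma Eh_bnd (f : X -> seq X -> R) (M : R) : 0 <= M -> hbnd f M -> forall t x0 s, `|Eh P h t f x0 s| <= M.
Proof.
move=> M0 hf t; elim: t => [|t IH] x0 s /=; first exact: hf.
apply: (csum_bnd (hP _ _) M0) => y; exact: IH.
Qed.

Lemma Eh_add (f g : X -> seq X -> R) (M N : R) : 0 <= M -> hbnd f M -> 0 <= N -> hbnd g N ->
  forall t x0 s, Eh P h t (fun x0 s => f x0 s + g x0 s) x0 s =
     Eh P h t f x0 s + Eh P h t g x0 s.
Proof.
move=> M0 hf N0 hg t; elim: t => [|t IH] x0 s //=.
have -> : (fun y => P (h x0 s) (last x0 s) y * Eh P h t (fun x1 s0 => f x1 s0 + g x1 s0) x0 (rcons s y))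
  = (fun y => P (h x0 s) (last x0 s) y * (Eh P h t f x0 (rcons s y) + Eh P h t g x0 (rcons s y))).
  by apply/funext => y; rewrite IH.
apply: (csumD (hP _ _) M0 _ N0) => y; exact: Eh_bnd.
Qed.

Lemma Eh_scale (f : X -> seq X -> R) (M k : R) : 0 <= M -> hbnd f M ->
  forall t x0 s, Eh P h t (fun x0 s => k * f x0 s) x0 s = k * Eh P h t f x0 s.
Proof.
move=> M0 hf t; elim: t => [|t IH] x0 s //=.
have -> : (fun y => P (h x0 s) (last x0 s) y * Eh P h t (fun x1 s0 => k * f x1 s0) x0 (rcons s y))
  = (fun y => P (h x0 s) (last x0 s) y * (k * Eh P h t f x0 (rcons s y))).
  by apply/funext => y; rewrite IH.
apply: (csumMl k (hP _ _) M0) => y; exact: Eh_bnd.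
Qed.

Lemma Eh_ge0 (f : X -> seq X -> R) (M : R) : 0 <= M -> hbnd f M -> (forall x0 s, 0 <= f x0 s) ->
  forall t x0 s, 0 <= Eh P h t f x0 s.
Proof.
move=> M0 hf f0 t; elim: t => [|t IH] x0 s //=.
rewrite -(csum0 (P (h x0 s) (last x0 s))).
apply: (csum_le (M:=0) (N:=M) (hP _ _)) => //.
- by move=> y; rewrite normr0.
- by move=> y; exact: Eh_bnd.
Qed.

Lemma Eh_peel f t x0 s : Eh P h t.+1 f x0 s =
  Eh P h t (fun x0 s => csum (fun y => P (h x0 s) (last x0 s) y * f x0 (rcons s y))) x0 s.
Proof.
elim: t s => [|t IH] s //.
have E : forall t' f' s', Eh P h t'.+1 f' x0 s' =
  csum (fun y => P (h x0 s') (last x0 s') y * Eh P h t' f' x0 (rcons s' y)) by [].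
rewrite E [in RHS]E; congr csum; apply/funext => y; by rewrite IH.
Qed.

Lemma Eh_zero f : (forall x0 s, s != [::] -> f x0 s = 0) ->
  forall t x0 s, Eh P h t.+1 f x0 s = 0.
Proof.
move=> hf t; elim: t => [|t IH] x0 s /=.
  have -> : (fun y => P (h x0 s) (last x0 s) y * f x0 (rcons s y)) =
     (fun y => P (h x0 s) (last x0 s) y * 0).
    by apply/funext => y; rewrite hf // -size_eq0 size_rcons.
  exact: csum0.
have -> : (fun y => P (h x0 s) (last x0 s) y * Eh P h t.+1 f x0 (rcons s y)) =
   (fun y => P (h x0 s) (last x0 s) y * 0).
  by apply/funext => y; rewrite IH.
exact: csum0.
Qed.

End Pol.

Variable beta : R.
Hypothesis hb : 0 < beta < 1.

Lemma nb1 : `|beta| < 1.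
Proof. by case/andP: hb => h0 h1; rewrite ger0_norm // ltW. Qed.

Lemma tsum_cvg (a : nat -> R) (M : R) : (forall t, `|a t| <= M) ->
  cvgn (series (fun t => beta ^+ t * a t)).
Proof.
move=> ha; apply: (@dom_cvg _ (geometric M beta)); last exact: is_cvg_geometric_series nb1.
move=> t /=.
have b0 : 0 <= beta ^+ t by rewrite exprn_ge0 // ltW //; case/andP: hb.
rewrite normrM (ger0_norm b0) mulrC.
by apply: ler_wpM2r.
Qed.

Lemma pow_vanish (a : nat -> R) (M : R) : (forall t, `|a t| <= M) ->
  (fun t => beta ^+ t * a t) @ \oo --> (0:R).
Proof.
move=> ha.
have hM : (fun t => M * beta ^+ t) @ \oo --> (0:R).
  by rewrite -(mulr0 M); apply: cvgMl_tmp; apply: cvg_expr nb1.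
have hM' : (fun t => - (M * beta ^+ t)) @ \oo --> (0:R).
  by rewrite -oppr0; apply: cvgN.
apply: (squeeze_cvgr _ hM' hM); apply: nearW => t.
have b0 : 0 <= beta ^+ t by rewrite exprn_ge0 // ltW //; case/andP: hb.
have := ha t; rewrite ler_norml => /andP[h1 h2].
rewrite -mulNr (mulrC (- M)) (mulrC M).
by rewrite !ler_wpM2l.
Qed.


Section Tele.
Variable h : X -> seq X -> bool.
Variables (F U Nx : X -> seq X -> R) (MF MU MN : R).
Hypotheses (MF0 : 0 <= MF) (MU0 : 0 <= MU) (MN0 : 0 <= MN).
Hypotheses (hF : hbnd F MF) (hU : hbnd U MU) (hN : hbnd Nx MN).
Hypothesis hUN : forall x0 s,
  csum (fun y => P (h x0 s) (last x0 s) y * U x0 (rcons s y)) = Nx x0 s.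

Lemma tele x :
  tsum (fun t => beta ^+ t * Eh P h t F x [::]) =
  U x [::] + tsum (fun t => beta ^+ t *
     Eh P h t (fun x0 s => F x0 s + (beta * Nx x0 s + (-1) * U x0 s)) x [::]).
Proof.
have b0 : 0 <= beta by case/andP: hb => /ltW.
set D := (fun x0 s => F x0 s + (beta * Nx x0 s + (-1) * U x0 s)).
have ED : forall t, Eh P h t D x [::] =
   Eh P h t F x [::] + (beta * Eh P h t Nx x [::] - Eh P h t U x [::]).
  move=> t; rewrite /D (@Eh_add h F _ MF (beta * MN + MU)) //.
  - rewrite (@Eh_add h (fun x0 s => beta * Nx x0 s) _ (beta*MN) MU) //.
    + rewrite (@Eh_scale h Nx MN) // (@Eh_scale h U MU) //; by rewrite mulN1r.
    + by rewrite mulr_ge0.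
    + by move=> x0 s; rewrite normrM (ger0_norm b0); apply: ler_wpM2l.
    + by move=> x0 s; rewrite mulN1r normrN.
  - by rewrite addr_ge0 // mulr_ge0.
  - move=> x0 s; apply: le_trans (ler_normD _ _) _; rewrite mulN1r normrN.
    by apply: lerD => //; rewrite normrM (ger0_norm b0); apply: ler_wpM2l.
have EU : forall t, Eh P h t.+1 U x [::] = Eh P h t Nx x [::].
  move=> t; rewrite Eh_peel; congr Eh; apply/funext => x0; apply/funext => s; exact: hUN.
have fin : forall T, series (fun t => beta ^+ t * Eh P h t D x [::]) T =
   series (fun t => beta ^+ t * Eh P h t F x [::]) T + beta ^+ T * Eh P h T U x [::] - U x [::].
  elim=> [|T IH]; first by rewrite /series /= !big_nil expr0 mul1r add0r subrr.
  rewrite !seriesS IH ED EU exprS.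
  ring.
have cF := @tsum_cvg _ MF (fun t => @Eh_bnd h F MF MF0 hF t x [::]).
have hv := @pow_vanish _ MU (fun t => @Eh_bnd h U MU MU0 hU t x [::]).
have L : series (fun t => beta ^+ t * Eh P h t D x [::]) @ \oo -->
    limn (series (fun t => beta ^+ t * Eh P h t F x [::])) + 0 - U x [::].
  rewrite (_ : series _ = fun T => series (fun t => beta ^+ t * Eh P h t F x [::]) T
        + beta ^+ T * Eh P h T U x [::] - U x [::]); last exact/funext/fin.
  apply: cvgB; last exact: cvg_cst.
  exact: cvgD.
rewrite /tsum (cvg_lim _ L) //; ring.
Qed.

End Tele.

Lemma b0 : 0 <= beta. Proof. by case/andP: hb => /ltW. Qed.
Lemma b1 : 0 <= 1 - beta. Proof. by case/andP: hb => _ /ltW; rewrite subr_ge0. Qed.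

Lemma tsum_ge0 (a : nat -> R) (M : R) : (forall t, `|a t| <= M) ->
  (forall t, 0 <= a t) -> 0 <= tsum (fun t => beta ^+ t * a t).
Proof.
move=> ha a0; apply: limr_ge; first exact: tsum_cvg ha.
apply: nearW => n; rewrite /series /=; apply: sumr_ge0 => i _.
by rewrite mulr_ge0 // exprn_ge0 // b0.
Qed.

Lemma tsum_first (a : nat -> R) : (forall t, a t.+1 = 0) ->
  tsum (fun t => beta ^+ t * a t) = a 0%N.
Proof.
move=> ha; rewrite /tsum; apply: cvg_lim => //; apply: cvg_near_cst.
exists 1%N => // n /= hn; case: n hn => // n _.
elim: n => [|n IH]; first by rewrite seriesS /series /= big_nil add0r expr0 mul1r.
by rewrite seriesS IH ha mulr0 addr0.
Qed.

Lemma conv_bnd (a b B : R) : `|a| <= B -> `|b| <= B -> `|(1 - beta) * a + beta * b| <= B.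
Proof.
move=> ha hb'; apply: le_trans (ler_normD _ _) _.
rewrite !normrM (ger0_norm b0) (ger0_norm b1).
have -> : B = (1 - beta) * B + beta * B by ring.
by apply: lerD; apply: ler_wpM2l => //; [exact: b1|exact: b0].
Qed.


Variables (c : X -> bool -> R) (lam : R) (V : X -> R) (MV Mc : R).
Hypotheses (MV0 : 0 <= MV) (hVM : forall x, `|V x| <= MV).
Hypotheses (Mc0 : 0 <= Mc) (hcM : forall x a, `|c x a| <= Mc).
Hypothesis hbell : forall x, V x = Num.min (Hq P c beta lam V x false) (Hq P c beta lam V x true).

Definition B := Mc + `|lam| + MV.
Lemma B0 : 0 <= B. Proof. by rewrite /B !addr_ge0. Qed.
Lemma BV x : `|V x| <= B.
Proof. apply: le_trans (hVM x) _; rewrite /B; move: Mc0 (normr_ge0 lam); lra. Qed.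
Lemma Blam : `|lam| <= B.
Proof. rewrite /B; move: Mc0 MV0; lra. Qed.
Lemma Bclam x a : `|clam c lam x a| <= B.
Proof.
rewrite /clam /B; apply: le_trans (ler_normD _ _) _; rewrite -addrA; apply: lerD => //.
apply: le_trans (_ : `|lam| <= _); last by rewrite lerDl.
by case: a => //; rewrite normr0.
Qed.
Lemma Bcs a x : `|csum (fun y => P a x y * V y)| <= B.
Proof. exact: (csum_bnd (hP a x) B0 BV). Qed.
Lemma BH x a : `|Hq P c beta lam V x a| <= B.
Proof. exact: conv_bnd (Bclam x a) (Bcs a x). Qed.
Lemma BW x : `|Wfun P beta lam V x| <= B.
Proof. exact: conv_bnd Blam (Bcs true x). Qed.

Lemma V_le_H x a : V x <= Hq P c beta lam V x a.
Proof. by rewrite hbell; case: a; rewrite ge_min lexx ?orbT. Qed.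

Lemma H_g x : Hq P c beta lam V x (gpol P c beta lam V x) = V x.
Proof.
rewrite /gpol; case hl: (Hq P c beta lam V x false < Hq P c beta lam V x true) => /=.
  by rewrite [RHS]hbell min_l // ltW.
by rewrite [RHS]hbell min_r // leNgt hl.
Qed.

Lemma V_nb x : ~ (Hq P c beta lam V x false < Hq P c beta lam V x true) ->
  V x = Hq P c beta lam V x true.
Proof. by move=> /negP; rewrite -leNgt => h; rewrite hbell min_r. Qed.

Lemma J_tele (h : X -> seq X -> bool) x :
  Jpol P c beta lam h x = V x + tsum (fun t => beta ^+ t *
    Eh P h t (fun x0 s => Hq P c beta lam V (last x0 s) (h x0 s) - V (last x0 s)) x [::]).
Proof.
have T := @tele h (fun x0 s => (1 - beta) * clam c lam (last x0 s) (h x0 s))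
  (fun x0 s => V (last x0 s)) (fun x0 s => csum (fun y => P (h x0 s) (last x0 s) y * V y))
  B B B B0 B0 B0.
rewrite /= in T.
have hCh : hbnd (fun x0 s => clam c lam (last x0 s) (h x0 s)) B by move=> x0 s; exact: Bclam.
have E1 : Jpol P c beta lam h x = tsum (fun t => beta ^+ t *
    Eh P h t (fun x0 s => (1 - beta) * clam c lam (last x0 s) (h x0 s)) x [::]).
  rewrite /Jpol /tsum -limn_Ml; last exact: (@tsum_cvg _ B (fun t => @Eh_bnd h _ B B0 hCh t x [::])).
  have -> : (fun t => (1 - beta) * (beta ^+ t * Eh P h t (fun x0 s => clam c lam (last x0 s) (h x0 s)) x [::]))
     = (fun t => beta ^+ t * Eh P h t (fun x0 s => (1 - beta) * clam c lam (last x0 s) (h x0 s)) x [::]).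
    by apply/funext => t; rewrite (@Eh_scale h _ B (1 - beta) B0 hCh) mulrCA.
  by [].
rewrite E1 T.
- have -> : (fun x0 s => (1 - beta) * clam c lam (last x0 s) (h x0 s) + (beta * csum (fun y => P (h x0 s) (last x0 s) y * V y) + -1 * V (last x0 s)))
    = (fun x0 s => Hq P c beta lam V (last x0 s) (h x0 s) - V (last x0 s)).
    by apply/funext => x0; apply/funext => s; rewrite /Hq; ring.
  by [].
- move=> x0 s; rewrite normrM (ger0_norm b1); apply: le_trans (Bclam _ _).
  rewrite -[X in _ <= X]mul1r; apply: ler_wpM2r; first exact: normr_ge0.
  by rewrite lerBlDr lerDl b0.
- by move=> x0 s; exact: BV.
- by move=> x0 s; exact: Bcs.
- by move=> x0 s; congr csum; apply/funext => y; rewrite last_rcons.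
Qed.


Notation g := (gpol P c beta lam V).
Notation H := (Hq P c beta lam V).

Lemma Dbnd (h : X -> seq X -> bool) :
  hbnd (fun x0 s => H (last x0 s) (h x0 s) - V (last x0 s)) (B + B).
Proof.
move=> x0 s; apply: le_trans (ler_normB _ _) _; apply: lerD; [exact: BH|exact: BV].
Qed.

Lemma J_gafter (h : X -> seq X -> bool) x :
  (forall x0 s, s != [::] -> h x0 s = g (last x0 s)) ->
  Jpol P c beta lam h x = H x (h x [::]).
Proof.
move=> hg; rewrite J_tele tsum_first /=; first by rewrite addrC subrK.
move=> t; apply: (@Eh_zero h) => x0 s hs.
by rewrite hg // H_g subrr.
Qed.

Lemma J_ge (h : X -> seq X -> bool) x : V x <= Jpol P c beta lam h x.
Proof.
rewrite J_tele lerDl; apply: (@tsum_ge0 _ (B + B)).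
  move=> t; apply: (@Eh_bnd h _ (B + B)); [by rewrite addr_ge0 // B0|exact: Dbnd].
move=> t; apply: (@Eh_ge0 h _ (B + B)); [by rewrite addr_ge0 // B0|exact: Dbnd|].
by move=> x0 s; rewrite subr_ge0 V_le_H.
Qed.

Definition sg : X -> seq X -> bool := fun x0 s => (s != [::]) && g (last x0 s).

Lemma hsig0_nil x0 : hsig (@stop0 X) g x0 [::] = true. Proof. by []. Qed.
Lemma hsig0_cons x0 s : s != [::] -> hsig (@stop0 X) g x0 s = g (last x0 s).
Proof. by case: s => // a s _; rewrite /hsig /notyet /=. Qed.
Lemma hsg_nil x0 : hsig sg g x0 [::] = false. Proof. by []. Qed.
Lemma hsg_cons x0 s : s != [::] -> hsig sg g x0 s = g (last x0 s).
Proof. by move=> hs; rewrite /hsig /sg hs /=; case: ifP. Qed.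

Lemma J0 x : Jpol P c beta lam (hsig (@stop0 X) g) x = H x true.
Proof. by rewrite J_gafter //; exact: hsig0_cons. Qed.

Lemma Jsg x : Jpol P c beta lam (hsig sg g) x = H x false.
Proof. by rewrite J_gafter //; exact: hsg_cons. Qed.


Lemma notyet_rcons (stop : X -> seq X -> bool) x0 s y :
  notyet stop x0 (rcons s y) = sig_gt stop x0 s.
Proof.
rewrite /sig_gt /notyet size_rcons -addn1 iotaD all_cat /= add0n -cats1 take_size_cat //.
rewrite andbT; congr (_ && _); apply: eq_in_all => k; rewrite mem_iota add0n => /andP[_ hk].
by rewrite takel_cat // ltnW.
Qed.

Lemma ifB (b : bool) (v : R) : `|v| <= B -> `|if b then v else 0| <= B.
Proof. by case: b => // _; rewrite normr0 B0. Qed.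

Lemma cB x a : `|c x a| <= B.
Proof. apply: le_trans (hcM x a) _; rewrite /B; move: MV0 (normr_ge0 lam); lra. Qed.

Section D.
Variable stop : X -> seq X -> bool.

Definition Lf := (fun x0 s =>
        (if sig_gt stop x0 s then c (last x0 s) false else 0) +
        (if sig_eq stop x0 s then c (last x0 s) true else 0)).
Definition Wf := (fun x0 s => if sig_eq stop x0 s then Wfun P beta lam V (last x0 s) else 0).
Definition Ud := (fun x0 s => if notyet stop x0 s then V (last x0 s) else 0).
Definition Nd := (fun x0 s => if sig_gt stop x0 s then
    csum (fun y => P false (last x0 s) y * V y) else 0).
Definition Fd := (fun x0 s => (1 - beta) * Lf x0 s + Wf x0 s).
Definition Dd := (fun x0 s => if notyet stop x0 s then
    H (last x0 s) (stop x0 s) - V (last x0 s) else 0).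

Lemma LfB : hbnd Lf (B + B).
Proof. move=> x0 s; apply: le_trans (ler_normD _ _) _; apply: lerD; apply: ifB; exact: cB. Qed.
Lemma WfB : hbnd Wf B.
Proof. move=> x0 s; apply: ifB; exact: BW. Qed.
Lemma UdB : hbnd Ud B.
Proof. move=> x0 s; apply: ifB; exact: BV. Qed.
Lemma NdB : hbnd Nd B.
Proof. move=> x0 s; apply: ifB; exact: Bcs. Qed.
Lemma FdB : hbnd Fd (B + B + B).
Proof.
move=> x0 s; apply: le_trans (ler_normD _ _) _; apply: lerD; last exact: WfB.
rewrite normrM (ger0_norm b1); apply: le_trans (LfB x0 s).
rewrite -[X in _ <= X]mul1r; apply: ler_wpM2r; first exact: normr_ge0.
by rewrite lerBlDr lerDl b0.
Qed.
Lemma DdB : hbnd Dd (B + B).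
Proof.
move=> x0 s; rewrite /Dd; case: ifP => _; first exact: Dbnd (fun x0 s => stop x0 s) x0 s.
by rewrite normr0 addr_ge0 // B0.
Qed.

Lemma Kd x : (1 - beta) * Defs.Lfun P c beta x stop + EWsig P beta (Wfun P beta lam V) x stop =
  V x + tsum (fun t => beta ^+ t * Eh P (@passive X) t Dd x [::]).
Proof.
have BB0 : 0 <= B + B by rewrite addr_ge0 // B0.
have BBB0 : 0 <= B + B + B by rewrite !addr_ge0 // B0.
have T := @tele (@passive X) Fd Ud Nd (B + B + B) B B BBB0 B0 B0 FdB UdB NdB.
have E : (1 - beta) * Defs.Lfun P c beta x stop + EWsig P beta (Wfun P beta lam V) x stop
   = tsum (fun t => beta ^+ t * Eh P (@passive X) t Fd x [::]).
  rewrite /Defs.Lfun /EWsig /tsum -limn_Ml; last first.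
    exact: (@tsum_cvg _ (B + B) (fun t => @Eh_bnd _ Lf _ BB0 LfB t x [::])).
  rewrite -limn_D; last first.
  - exact: (@tsum_cvg _ B (fun t => @Eh_bnd _ Wf _ B0 WfB t x [::])).
  - apply: cvgn_Ml; exact: (@tsum_cvg _ (B + B) (fun t => @Eh_bnd _ Lf _ BB0 LfB t x [::])).
  have -> : (fun n => (1 - beta) * (beta ^+ n * Eh P (@passive X) n Lf x [::]) +
       beta ^+ n * Eh P (@passive X) n Wf x [::]) =
     (fun t => beta ^+ t * Eh P (@passive X) t Fd x [::]).
    apply/funext => t; rewrite /Fd (@Eh_add _ (fun x0 s => (1 - beta) * Lf x0 s) Wf (B + B) B) //.
    + rewrite (@Eh_scale _ Lf (B + B) (1 - beta) BB0 LfB). apply: esym; etransitivity; first apply: mulrDr. by rewrite mulrCA.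
    + move=> x0 s; rewrite normrM (ger0_norm b1); apply: le_trans (LfB x0 s).
      rewrite -[X in _ <= X]mul1r; apply: ler_wpM2r; first exact: normr_ge0.
      by rewrite lerBlDr lerDl b0.
    + exact: B0.
    + exact: WfB.
  by [].
rewrite E T.
- have -> : (fun x0 s => Fd x0 s + (beta * Nd x0 s + -1 * Ud x0 s)) = Dd.
    apply/funext => x0; apply/funext => s.
    rewrite /Fd /Lf /Wf /Nd /Ud /Dd /sig_gt /sig_eq.
    case: (notyet stop x0 s); case: (stop x0 s) => /=; rewrite /Hq /clam /Wfun; ring.
  by rewrite /Ud /notyet.
- move=> x0 s.
  have -> : (fun y => P (@passive X x0 s) (last x0 s) y * Ud x0 (rcons s y)) =
     (fun y => P false (last x0 s) y * (if sig_gt stop x0 s then V y else 0)).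
    by apply/funext => y; rewrite /Ud notyet_rcons last_rcons.
  rewrite /Nd; case: (sig_gt stop x0 s) => //; exact: csum0.
Qed.

End D.


Lemma Kd_sg x : (1 - beta) * Defs.Lfun P c beta x sg + EWsig P beta (Wfun P beta lam V) x sg = H x false.
Proof.
rewrite Kd tsum_first /=; first by rewrite /Dd /= addrC subrK.
move=> t; apply: (@Eh_zero (@passive X)) => x0 s hs.
by rewrite /Dd; case: ifP => // _; rewrite /sg hs /= H_g subrr.
Qed.

Lemma Kd_ge stop x : V x <= (1 - beta) * Defs.Lfun P c beta x stop + EWsig P beta (Wfun P beta lam V) x stop.
Proof.
have BB0 : 0 <= B + B by rewrite addr_ge0 // B0.
rewrite Kd lerDl; apply: (@tsum_ge0 _ (B + B)).
  by move=> t; apply: (@Eh_bnd _ _ (B + B) BB0 (DdB stop)).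
move=> t; apply: (@Eh_ge0 _ _ (B + B) BB0 (DdB stop)).
by move=> x0 s; rewrite /Dd; case: ifP => // _; rewrite subr_ge0 V_le_H.
Qed.

Lemma main_eq :
  Pi_a P c beta lam V = Pi_b P c beta lam V /\
  Pi_b P c beta lam V = Pi_c P c beta lam V /\
  Pi_c P c beta lam V = Pi_d P c beta lam V.
Proof.
have ab : Pi_a P c beta lam V = Pi_b P c beta lam V.
  rewrite /Pi_a /Pi_b; apply/funext => x; apply/propext; rewrite /gpol /=.
  by case: (_ < _).
have bc : Pi_b P c beta lam V = Pi_c P c beta lam V.
  rewrite /Pi_b /Pi_c; apply/funext => x; apply/propext; split => /=.
    move=> hx; exists sg; split; first by move=> /(_ x).
    by rewrite Jsg J0.
  move=> [stop [_ hJ]]; rewrite ltNge; apply/negP => hle.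
  have hV : V x = H x true by rewrite hbell min_r.
  have := J_ge (hsig stop g) x; rewrite J0 in hJ.
  move: hJ; rewrite -hV => hJ hge.
  by move: (lt_le_trans hJ hge); rewrite ltxx.
have bd : Pi_b P c beta lam V = Pi_d P c beta lam V.
  rewrite /Pi_b /Pi_d; apply/funext => x; apply/propext.
  have HW : H x true = (1 - beta) * c x true + Wfun P beta lam V x.
    by rewrite /Hq /clam /Wfun; ring.
  split => /=.
    move=> hx; exists sg; split; first by move=> /(_ x).
    rewrite mulrBr; have := Kd_sg x; move: hx HW.
    set L1 := _ * Defs.Lfun _ _ _ _ _; set E1 := EWsig _ _ _ _ _; set C1 := _ * c x true.
    lra.
  move=> [stop [_ hd]]; rewrite ltNge; apply/negP => hle.
  have hV : V x = H x true by rewrite hbell min_r.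
  have := Kd_ge stop x; move: hd HW hV; rewrite mulrBr.
  set L1 := _ * Defs.Lfun _ _ _ _ _; set E1 := EWsig _ _ _ _ _; set C1 := _ * c x true.
  lra.
by split => //; split => //; rewrite -bc.
Qed.

End Aux.

Theorem proposition1 (R : realType) (X : countType)
  (P : bool -> X -> X -> R) (c : X -> bool -> R) (beta lam : R) (V : X -> R) :
  0 < beta < 1 ->
  stochastic P ->
  bounded_cost c ->
  bellman_fixed_point P c beta lam V ->
  Pi_a P c beta lam V = Pi_b P c beta lam V /\
  Pi_b P c beta lam V = Pi_c P c beta lam V /\
  Pi_c P c beta lam V = Pi_d P c beta lam V.
Proof.
move=> hb [hP0 hP1] [Mc hc] [[MV hV] hbell].
have hP : forall a x, @sprob R X (P a x) by move=> a x; split; [exact: hP0|exact: hP1].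
apply: (@main_eq R X P hP beta hb c lam V `|MV| `|Mc|) => //.
- by move=> x; apply: le_trans (hV x) (ler_norm _).
- by move=> x a; apply: le_trans (hc x a) (ler_norm _).
Qed.
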